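(* Let $A$ be a trace class positive self-adjoint operator on a complex Hilbert space $\mathcal H$, let $e\in\mathcal H$ and $N\ge1$, and assume $Ae,A^2e,\dots,A^Ne$ are linearly independent. Then $$\mathrm{Tr}(A)\ge\frac{\det\Big(\big((A^{k+\ell}e|e)\big)_{0\le k\le N-1,\,0\le\ell\le N-2}\ \Big|\ \big((A^{k+N}e|e)\big)_{0\le k\le N-1}\Big)}{\det\big((A^{k+\ell}e|e)\big)_{0\le k,\ell\le N-1}},$$ where the numerator is the determinant of the $N\times N$ matrix whose first $N-1$ columns are indexed by $\ell=0,\dots,N-2$ with entries $(A^{k+\ell}e|e)$ and whose last column has entries $(A^{k+N}e|e)$ ($k$ the row index). Equality holds if and only if the range of $A$ has dimension $N$ and $e$ belongs to the range of $A$. *)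

(* Defs.v *)
From Stdlib Require Import Reals Lra Lia Arith.
Open Scope R_scope.

Record Cpx := mkC { Cre : R; Cim : R }.
Definition C0 : Cpx := mkC 0 0.
Definition C1 : Cpx := mkC 1 0.
Definition Cadd (a b : Cpx) : Cpx := mkC (Cre a + Cre b) (Cim a + Cim b).
Definition Cmul (a b : Cpx) : Cpx :=
  mkC (Cre a * Cre b - Cim a * Cim b) (Cre a * Cim b + Cim a * Cre b).
Definition Cconj (a : Cpx) : Cpx := mkC (Cre a) (- Cim a).

(* inner product linear in the first argument, conjugate-linear in the second *)
Record HilbertSpace := {
  carrier :> Type;
  vadd : carrier -> carrier -> carrier;
  vzero : carrier;
  vopp : carrier -> carrier;
  vscal : Cpx -> carrier -> carrier;
  inner : carrier -> carrier -> Cpx;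
  vadd_assoc : forall x y z, vadd x (vadd y z) = vadd (vadd x y) z;
  vadd_comm : forall x y, vadd x y = vadd y x;
  vadd_zero : forall x, vadd x vzero = x;
  vadd_opp : forall x, vadd x (vopp x) = vzero;
  vscal_one : forall x, vscal C1 x = x;
  vscal_assoc : forall a b x, vscal a (vscal b x) = vscal (Cmul a b) x;
  vscal_addl : forall a b x, vscal (Cadd a b) x = vadd (vscal a x) (vscal b x);
  vscal_addr : forall a x y, vscal a (vadd x y) = vadd (vscal a x) (vscal a y);
  inner_addl : forall x y z, inner (vadd x y) z = Cadd (inner x z) (inner y z);
  inner_scall : forall a x y, inner (vscal a x) y = Cmul a (inner x y);
  inner_conj : forall x y, inner y x = Cconj (inner x y);
  inner_pos : forall x, 0 <= Cre (inner x x);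
  inner_def : forall x, inner x x = C0 -> x = vzero;
  complete : forall u : nat -> carrier,
    (forall eps, 0 < eps -> exists n0, forall n m, (n0 <= n)%nat -> (n0 <= m)%nat ->
        sqrt (Cre (inner (vadd (u n) (vopp (u m))) (vadd (u n) (vopp (u m))))) < eps) ->
    exists l, forall eps, 0 < eps -> exists n0, forall n, (n0 <= n)%nat ->
        sqrt (Cre (inner (vadd (u n) (vopp l)) (vadd (u n) (vopp l)))) < eps
}.

Section Ops.
Variable H : HilbertSpace.

Definition hnorm (x : H) : R := sqrt (Cre (inner H x x)).

Fixpoint Rsum (n : nat) (f : nat -> R) : R :=
  match n with O => 0 | S m => Rsum m f + f m end.
Fixpoint vsum (n : nat) (f : nat -> H) : H :=
  match n with O => vzero H | S m => vadd H (vsum m f) (f m) end.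

Definition is_linear_op (A : H -> H) : Prop :=
  (forall x y, A (vadd H x y) = vadd H (A x) (A y)) /\
  (forall a x, A (vscal H a x) = vscal H a (A x)).
Definition is_bounded_op (A : H -> H) : Prop :=
  exists M, forall x, hnorm (A x) <= M * hnorm x.
Definition is_self_adjoint (A : H -> H) : Prop :=
  forall x y, inner H (A x) y = inner H x (A y).
Definition is_positive_op (A : H -> H) : Prop :=
  forall x, 0 <= Cre (inner H (A x) x).

Definition orthonormal (n : nat) (u : nat -> H) : Prop :=
  forall i j, (i < n)%nat -> (j < n)%nat ->
    inner H (u i) (u j) = if Nat.eqb i j then C1 else C0.

(* For a positive operator A, Tr(A) = sum_i (A u_i|u_i) over any orthonormal
   basis = sup of such sums over finite orthonormal families; A is trace
   class iff this supremum is finite.  [is_trace A t] : Tr(A) = t. *)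
Definition is_trace (A : H -> H) (t : R) : Prop :=
  is_lub (fun r => exists n u, orthonormal n u /\
                     r = Rsum n (fun i => Cre (inner H (A (u i)) (u i)))) t.

Definition lin_indep (n : nat) (v : nat -> H) : Prop :=
  forall c : nat -> Cpx, vsum n (fun i => vscal H (c i) (v i)) = vzero H ->
    forall i, (i < n)%nat -> c i = C0.

Definition range_dim (A : H -> H) (d : nat) : Prop :=
  exists b : nat -> H, lin_indep d b /\
    forall y, (exists x, y = A x) <-> (exists c : nat -> Cpx, y = vsum d (fun i => vscal H (c i) (b i))).

Definition in_range (A : H -> H) (y : H) : Prop := exists x, A x = y.

End Ops.

Fixpoint det (n : nat) (M : nat -> nat -> R) : R :=
  match n with
  | O => 1
  | S m => Rsum (S m) (fun j => (-1) ^ j * M O j *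
             det m (fun i k => M (S i) (if Nat.ltb k j then k else S k)))
  end.

(* moments m_j = (A^j e | e) (real since A is self-adjoint; we take the real part,
   which is the whole value) *)
Definition moment (H : HilbertSpace) (A : H -> H) (e : H) (j : nat) : R :=
  Cre (inner H (Nat.iter j A e) e).

Definition gram_det (H : HilbertSpace) (A : H -> H) (e : H) (N : nat) : R :=
  det N (fun k l => moment H A e (k + l)).

Definition num_det (H : HilbertSpace) (A : H -> H) (e : H) (N : nat) : R :=
  det N (fun k l => if Nat.ltb l (N - 1) then moment H A e (k + l)
                    else moment H A e (k + N)).

(* Main.v *)
Require Import Defs.
From Stdlib Require Import Reals Lra ClassicalEpsilon FunctionalExtensionality.
From HB Require Import structures.
From mathcomp Require Import all_boot all_order all_algebra.
Set Implicit Arguments. Unset Strict Implicit. Unset Printing Implicit Defensive.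
Import GRing.Theory.
Delimit Scope R_scope with Re.
Open Scope R_scope.

Definition ceqb {T : Type} (x y : T) : bool :=
  if excluded_middle_informative (x = y) then true else false.
Lemma ceqP {T : Type} : Equality.axiom (@ceqb T).
Proof. move=> x y; rewrite /ceqb; case: excluded_middle_informative => h; by constructor. Qed.

Definition cfind {T : Type} (P : pred T) (n : nat) : option T :=
  match excluded_middle_informative (exists x, P x) with
  | left h => Some (proj1_sig (constructive_indefinite_description _ h))
  | right _ => None end.
Lemma cfind_correct {T : Type} (P : pred T) n x : cfind P n = Some x -> P x.
Proof. rewrite /cfind; case: excluded_middle_informative => // h [<-].
by case: constructive_indefinite_description. Qed.
Lemma cfind_complete {T : Type} (P : pred T) : (exists x, P x) -> exists n, cfind P n.
Proof. move=> h; exists 0%N; rewrite /cfind; by case: excluded_middle_informative. Qed.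
Lemma cfind_ext {T : Type} (P Q : pred T) : P =1 Q -> cfind P =1 cfind Q.
Proof. move=> h; have -> : P = Q by apply: functional_extensionality. by []. Qed.

HB.instance Definition _ := hasDecEq.Build Cpx ceqP.
HB.instance Definition _ := hasChoice.Build Cpx cfind_correct cfind_complete cfind_ext.

Definition Copp (a : Cpx) := mkC (- Cre a) (- Cim a).
Lemma Cext a b : Cre a = Cre b -> Cim a = Cim b -> a = b.
Proof. by case: a; case: b => ? ? ? ? /= -> ->. Qed.

Lemma Cadd_assoc : associative Cadd.
Proof. move=> a b c; apply: Cext => /=; ring. Qed.
Lemma Cadd_comm : commutative Cadd.
Proof. move=> a b; apply: Cext => /=; ring. Qed.
Lemma Cadd0 : left_id Defs.C0 Cadd.
Proof. move=> a; apply: Cext => /=; ring. Qed.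
Lemma CaddN : left_inverse Defs.C0 Copp Cadd.
Proof. move=> a; apply: Cext => /=; ring. Qed.
HB.instance Definition _ := GRing.isZmodule.Build Cpx Cadd_assoc Cadd_comm Cadd0 CaddN.

Lemma Cmul_assoc : forall a b c, Cmul a (Cmul b c) = Cmul (Cmul a b) c.
Proof. move=> a b c; apply: Cext => /=; ring. Qed.
Lemma Cmul_comm : commutative Cmul.
Proof. move=> a b; apply: Cext => /=; ring. Qed.
Lemma Cmul1 : left_id Defs.C1 Cmul.
Proof. move=> a; apply: Cext => /=; ring. Qed.
Lemma CmulDl : left_distributive Cmul Cadd.
Proof. move=> a b c; apply: Cext => /=; ring. Qed.
Lemma C1_neq0 : Defs.C1 != Defs.C0.
Proof. apply/eqP => h; have := f_equal Cre h => /=; lra. Qed.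
HB.instance Definition _ := GRing.Zmodule_isComNzRing.Build Cpx Cmul_assoc Cmul_comm Cmul1 CmulDl C1_neq0.

Definition Cinv (a : Cpx) :=
  mkC (Cre a / (Cre a * Cre a + Cim a * Cim a)) (- Cim a / (Cre a * Cre a + Cim a * Cim a)).
Lemma CmulV (a : Cpx) : a != (GRing.zero : Cpx) -> Cmul (Cinv a) a = GRing.one Cpx.
Proof. move=> h. have hn : Cre a * Cre a + Cim a * Cim a <> 0.
  move=> h0; move/eqP: h; apply; apply: Cext => /=; nra.
apply: Cext => /=; field; done. Qed.
Lemma Cinv0 : Cinv (GRing.zero : Cpx) = GRing.zero.
Proof. apply: Cext => /=; rewrite /Rdiv; ring. Qed.
HB.instance Definition _ := GRing.ComNzRing_isField.Build Cpx CmulV Cinv0.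



HB.instance Definition _ (H : HilbertSpace) := hasDecEq.Build (carrier H) ceqP.
HB.instance Definition _ (H : HilbertSpace) :=
  hasChoice.Build (carrier H) (@cfind_correct _) (@cfind_complete _) (@cfind_ext _).
Section HZ.
Variable H : HilbertSpace.
Lemma vadd0l : left_id (vzero H) (@vadd H).
Proof. move=> x; by rewrite vadd_comm vadd_zero. Qed.
Lemma vaddNl : left_inverse (vzero H) (@vopp H) (@vadd H).
Proof. move=> x; by rewrite vadd_comm vadd_opp. Qed.
End HZ.
HB.instance Definition _ (H : HilbertSpace) :=
  GRing.isZmodule.Build (carrier H) (@vadd_assoc H) (@vadd_comm H) (@vadd0l H) (@vaddNl H).
Section HL.
Variable H : HilbertSpace.
Lemma vscalA (a b : Cpx) (v : H) : vscal H a (vscal H b v) = vscal H (a * b)%R v.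
Proof. exact: vscal_assoc. Qed.
Lemma vscal1 : left_id (GRing.one Cpx) (@vscal H).
Proof. exact: vscal_one. Qed.
Lemma vscalDr : right_distributive (@vscal H) (@vadd H).
Proof. exact: vscal_addr. Qed.
Lemma vscalDl (v : H) : {morph (@vscal H)^~ v : a b / (a + b)%R >-> vadd H a b}.
Proof. move=> a b; exact: vscal_addl. Qed.
End HL.
HB.instance Definition _ (H : HilbertSpace) :=
  GRing.Zmodule_isLmodule.Build Cpx (carrier H) (@vscalA H) (@vscal1 H) (@vscalDr H) (@vscalDl H).

Local Open Scope ring_scope.

Lemma CconjD (a b : Cpx) : Cconj (a + b) = Cconj a + Cconj b.
Proof. apply: Cext => /=; ring. Qed.
Lemma CconjM (a b : Cpx) : Cconj (a * b) = Cconj a * Cconj b.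
Proof. apply: Cext => /=; ring. Qed.
Lemma CconjK (a : Cpx) : Cconj (Cconj a) = a.
Proof. apply: Cext => /=; ring. Qed.
Lemma Cconj0 : Cconj 0 = 0.
Proof. apply: Cext => /=; ring. Qed.
Lemma Cconj1 : Cconj 1 = 1.
Proof. apply: Cext => /=; ring. Qed.
Lemma CconjN (a : Cpx) : Cconj (- a) = - Cconj a.
Proof. apply: Cext => /=; ring. Qed.
Lemma Cconj_sum n (F : 'I_n -> Cpx) : Cconj (\sum_(i < n) F i) = \sum_(i < n) Cconj (F i).
Proof. exact: (big_morph Cconj CconjD Cconj0). Qed.
Lemma CreD (a b : Cpx) : Cre (a + b) = (Cre a + Cre b)%Re.
Proof. by []. Qed.
Lemma CimD (a b : Cpx) : Cim (a + b) = (Cim a + Cim b)%Re.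
Proof. by []. Qed.
Lemma CreN (a : Cpx) : Cre (- a) = (- Cre a)%Re.
Proof. by []. Qed.
Lemma CreM (a b : Cpx) : Cre (a * b) = (Cre a * Cre b - Cim a * Cim b)%Re.
Proof. by []. Qed.
Lemma CimM (a b : Cpx) : Cim (a * b) = (Cre a * Cim b + Cim a * Cre b)%Re.
Proof. by []. Qed.
Lemma Cre0 : Cre 0 = 0%Re. Proof. by []. Qed.
Lemma Cim0 : Cim 0 = 0%Re. Proof. by []. Qed.
Lemma Cre1 : Cre 1 = 1%Re. Proof. by []. Qed.
Lemma Cim1 : Cim 1 = 0%Re. Proof. by []. Qed.

Definition RC (r : R) : Cpx := mkC r 0.
Lemma RCD r s : RC (r + s)%Re = RC r + RC s.
Proof. apply: Cext => /=; ring. Qed.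
Lemma RCM r s : RC (r * s)%Re = RC r * RC s.
Proof. apply: Cext => /=; ring. Qed.
Lemma RCN r : RC (- r)%Re = - RC r.
Proof. apply: Cext => /=; ring. Qed.
Lemma RC0 : RC 0%Re = 0. Proof. by []. Qed.
Lemma RC1 : RC 1%Re = 1. Proof. by []. Qed.
Lemma RC_inj r s : RC r = RC s -> r = s.
Proof. by case. Qed.
Lemma Cconj_RC r : Cconj (RC r) = RC r.
Proof. apply: Cext => /=; ring. Qed.
Lemma Cre_RCM r a : Cre (RC r * a) = (r * Cre a)%Re.
Proof. rewrite /= ; ring. Qed.

Fixpoint Rs (n : nat) (f : nat -> R) : R := match n with O => 0%Re | S m => (Rs m f + f m)%Re end.
Lemma Rsum_Rs n f : Rsum n f = Rs n f.
Proof. by elim: n => //= n ->. Qed.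
Lemma Cre_sum n (F : nat -> Cpx) : Cre (\sum_(i < n) F i) = Rs n (fun i => Cre (F i)).
Proof. elim: n => [|n IH]; first by rewrite big_ord0.
by rewrite big_ord_recr /= IH. Qed.
Lemma Rs_le n f g : (forall i, (i < n)%N -> (f i <= g i)%Re) -> (Rs n f <= Rs n g)%Re.
Proof. elim: n => [|n IH] h /=; first lra.
have h1 := IH (fun i hi => h i (ltn_trans hi (ltnSn n))). have := h n (ltnSn n). lra. Qed.
Lemma Rs_ge0 n f : (forall i, (i < n)%N -> (0 <= f i)%Re) -> (0 <= Rs n f)%Re.
Proof. elim: n => [|n IH] h /=; first lra.
have h1 := IH (fun i hi => h i (ltn_trans hi (ltnSn n))). have := h n (ltnSn n). lra. Qed.

Definition Cn2 (a : Cpx) : R := (Cre a * Cre a + Cim a * Cim a)%Re.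
Lemma Cn2_ge0 a : (0 <= Cn2 a)%Re.
Proof. rewrite /Cn2; nra. Qed.
Lemma Cn2_eq0 a : Cn2 a = 0%Re -> a = 0.
Proof. rewrite /Cn2 => h; apply: Cext => /=; nra. Qed.
Lemma mul_conj a : a * Cconj a = RC (Cn2 a).
Proof. apply: Cext => /=; rewrite /Cn2; ring. Qed.
Lemma conj_mul a : Cconj a * a = RC (Cn2 a).
Proof. by rewrite mulrC mul_conj. Qed.
Lemma Cn2_conj a : Cn2 (Cconj a) = Cn2 a.
Proof. rewrite /Cn2 /=; ring. Qed.

Section Form.
Local Set Default Proof Using "All".
Variable V : lmodType Cpx.
Variable phi : V -> V -> Cpx.
Hypothesis phiDl : forall x y z, phi (x + y) z = phi x z + phi y z.
Hypothesis phiZl : forall a x y, phi (a *: x) y = a * phi x y.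
Hypothesis phiC : forall x y, phi y x = Cconj (phi x y).
Hypothesis phiP : forall x, (0 <= Cre (phi x x))%Re.

Lemma phiDr x y z : phi x (y + z) = phi x y + phi x z.
Proof. by rewrite phiC phiDl CconjD -!phiC. Qed.
Lemma phiZr a x y : phi x (a *: y) = Cconj a * phi x y.
Proof. by rewrite phiC phiZl CconjM -phiC. Qed.
Lemma phi0l y : phi 0 y = 0.
Proof. have := phiZl 0 0 y. by rewrite scale0r mul0r. Qed.
Lemma phi0r y : phi y 0 = 0.
Proof. by rewrite phiC phi0l Cconj0. Qed.
Lemma phiNl x y : phi (- x) y = - phi x y.
Proof. by rewrite -scaleN1r phiZl mulN1r. Qed.
Lemma phiNr x y : phi x (- y) = - phi x y.
Proof. by rewrite phiC phiNl CconjN -phiC. Qed.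
Lemma phiBl x y z : phi (x - y) z = phi x z - phi y z.
Proof. by rewrite phiDl phiNl. Qed.
Lemma phiBr x y z : phi x (y - z) = phi x y - phi x z.
Proof. by rewrite phiDr phiNr. Qed.
Lemma phi_suml n (F : 'I_n -> V) y : phi (\sum_(i < n) F i) y = \sum_(i < n) phi (F i) y.
Proof. elim: n F => [|n IH] F; first by rewrite !big_ord0 phi0l.
by rewrite !big_ord_recr /= phiDl IH. Qed.
Lemma phi_sumr n (F : 'I_n -> V) y : phi y (\sum_(i < n) F i) = \sum_(i < n) phi y (F i).
Proof. by rewrite phiC phi_suml Cconj_sum; apply: eq_bigr => i _; rewrite -phiC. Qed.
Lemma phi_real x : phi x x = RC (Cre (phi x x)).
Proof. have h := phiC x x. apply: Cext => //=. have := f_equal Cim h => /=. lra. Qed.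

(* Cauchy-Schwarz type: null vectors are orthogonal to everything *)
Lemma phi_null y z : phi y y = 0 -> phi y z = 0.
Proof.
move=> hy. set a := phi y z. set r := Cre (phi z z). set p := Cn2 a.
have hr : (0 <= r)%Re by apply: phiP.
have hp : (0 <= p)%Re by apply: Cn2_ge0.
have key : forall s : R, (0 <= - 2 * s * p + s * s * (p * r))%Re.
  move=> s. have := phiP (y - (RC s * a) *: z).
  rewrite phiBl !phiBr !phiZl !phiZr hy (phiC y z) -/a (phi_real z) -/r.
  match goal with |- (0 <= ?X)%Re -> _ =>
    have -> : X = (- 2 * s * p + s * s * (p * r))%Re by rewrite /p /Cn2 /=; ring end.
  done.
case: (Req_dec p 0) => hp0; first by apply: Cn2_eq0.
exfalso. set q := (p * r)%Re.
have hq : (0 <= q)%Re by rewrite /q; nra.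
have hq1 : (0 < q + 1)%Re by lra.
have := key (p / (q + 1))%Re.
have hpos : (0 < p / (q + 1))%Re by apply: Rdiv_lt_0_compat; lra.
rewrite -/q => h.
have h3 : (0 <= - 2 * p + p / (q+1) * q)%Re.
  apply: (Rmult_le_reg_l (p / (q+1))) => //.
  have -> : (p / (q + 1) * (-2 * p + p / (q + 1) * q) = -2 * (p / (q + 1)) * p + (p / (q + 1)) * (p / (q + 1)) * q)%Re by ring.
  rewrite Rmult_0_r; lra.
have h4 : (p / (q + 1) * q <= p)%Re.
  rewrite /Rdiv Rmult_assoc. rewrite -{2}(Rmult_1_r p). apply: Rmult_le_compat_l; first lra.
  apply: (Rmult_le_reg_l (q+1)); first lra. field_simplify; lra.
lra.
Qed.
End Form.

Lemma CimN (a : Cpx) : Cim (- a) = (- Cim a)%Re. Proof. by []. Qed.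
Lemma Cre_RC r : Cre (RC r) = r. Proof. by []. Qed.
Lemma Cim_RC r : Cim (RC r) = 0%Re. Proof. by []. Qed.
Lemma Cre_conj a : Cre (Cconj a) = Cre a. Proof. by []. Qed.
Lemma Cim_conj a : Cim (Cconj a) = (- Cim a)%Re. Proof. by []. Qed.
Lemma CreB (a b : Cpx) : Cre (a - b) = (Cre a - Cre b)%Re. Proof. by []. Qed.
Lemma CimB (a b : Cpx) : Cim (a - b) = (Cim a - Cim b)%Re. Proof. by []. Qed.
Ltac csimp := rewrite ?(CreD, CimD, CreB, CimB, CreM, CimM, CreN, CimN, Cre_RC, Cim_RC, Cre_conj, Cim_conj, Cre0, Cim0, Cre1, Cim1).
Local Open Scope ring_scope.

Lemma sum_delta r (F : nat -> Cpx) b : (b < r)%N ->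
  \sum_(a < r) F a * ((a : nat) == b)%:R = F b.
Proof.
elim: r => [|r IH] hb //. rewrite big_ord_recr /=.
case: (ltngtP b r) => h.
- by rewrite IH // mulr0 addr0.
- by move: hb; rewrite ltnS leqNgt h.
- subst. rewrite mulr1 big1 ?add0r // => a _. by rewrite (ltn_eqF (ltn_ord a)) mulr0.
Qed.
Lemma sum_delta' r (F : nat -> Cpx) b : (b < r)%N ->
  \sum_(a < r) ((a : nat) == b)%:R * F a = F b.
Proof. move=> h; rewrite -(sum_delta F h); apply: eq_bigr => i _; exact: mulrC. Qed.

Section Span.
Variable V : lmodType Cpx.
Definition inspan n (x : nat -> V) y := exists c : nat -> Cpx, y = \sum_(l < n) c l *: x l.
Definition indep n (x : nat -> V) :=
  forall c : nat -> Cpx, \sum_(i < n) c i *: x i = 0 -> forall i, (i < n)%N -> c i = 0.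

Lemma inspan0 n x : inspan n x 0.
Proof. exists (fun _ => 0); by rewrite big1 // => i _; rewrite scale0r. Qed.
Lemma inspanD n x y z : inspan n x y -> inspan n x z -> inspan n x (y + z).
Proof. move=> [c ->] [d ->]; exists (fun l => c l + d l); rewrite -big_split /=.
by apply: eq_bigr => i _; rewrite scalerDl. Qed.
Lemma inspanZ n x a y : inspan n x y -> inspan n x (a *: y).
Proof. move=> [c ->]; exists (fun l => a * c l); rewrite scaler_sumr.
by apply: eq_bigr => i _; rewrite scalerA. Qed.
Lemma inspanN n x y : inspan n x y -> inspan n x (- y).
Proof. by move=> h; rewrite -scaleN1r; apply: inspanZ. Qed.
Lemma inspanB n x y z : inspan n x y -> inspan n x z -> inspan n x (y - z).
Proof. by move=> h1 h2; apply: inspanD => //; apply: inspanN. Qed.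
Lemma inspan_sum n x m (F : 'I_m -> V) : (forall i, inspan n x (F i)) -> inspan n x (\sum_(i < m) F i).
Proof. elim: m F => [|m IH] F h; first by rewrite big_ord0; apply: inspan0.
rewrite big_ord_recr; apply: inspanD; last exact: h. by apply: IH. Qed.
Lemma inspan_x n x l : (l < n)%N -> inspan n x (x l).
Proof. move=> hl; exists (fun i => (i == l)%:R).
have := sum_delta' (fun _ => 1) hl. move=> _.
elim: n hl => [|n IH] hl //. rewrite big_ord_recr /=.
case: (ltngtP l n) => h.
- by rewrite -IH // scale0r addr0.
- by move: hl; rewrite ltnS leqNgt h.
- subst. rewrite scale1r big1 ?add0r // => a _. by rewrite (ltn_eqF (ltn_ord a)) scale0r.
Qed.
Lemma inspan_mono n n' x y : (n <= n')%N -> inspan n x y -> inspan n' x y.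
Proof.
move=> hn [c ->]. exists (fun l => if (l < n)%N then c l else 0).
rewrite -(subnKC hn) big_split_ord /=. rewrite [X in _ = _ + X]big1 ?addr0.
  by apply: eq_bigr => i _; rewrite ltn_ord.
by move=> i _; rewrite ltnNge leq_addr /= scale0r.
Qed.
Lemma inspan_trans n x m (y : nat -> V) z :
  (forall i, (i < m)%N -> inspan n x (y i)) -> inspan m y z -> inspan n x z.
Proof. move=> hy [c ->]; apply: inspan_sum => i. apply: inspanZ. exact: hy. Qed.
End Span.

Section GS.
Variable V : lmodType Cpx.
Variable phi : V -> V -> Cpx.
Hypothesis phiDl : forall x y z, phi (x + y) z = phi x z + phi y z.
Hypothesis phiZl : forall a x y, phi (a *: x) y = a * phi x y.
Hypothesis phiC : forall x y, phi y x = Cconj (phi x y).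
Hypothesis phiP : forall x, (0 <= Cre (phi x x))%Re.

Let phiDr := phiDr phiDl phiZl phiC phiP.
Let phiZr := phiZr phiDl phiZl phiC phiP.
Let phi0l := phi0l phiDl phiZl phiC phiP.
Let phi0r := phi0r phiDl phiZl phiC phiP.
Let phiBl := phiBl phiDl phiZl phiC phiP.
Let phiBr := phiBr phiDl phiZl phiC phiP.
Let phi_suml := phi_suml phiDl phiZl phiC phiP.
Let phi_sumr := phi_sumr phiDl phiZl phiC phiP.
Let phi_real := phi_real phiDl phiZl phiC phiP.
Let phi_null := phi_null phiDl phiZl phiC phiP.
Local Set Default Proof Using "All".
Definition ortho r (h : nat -> V) :=
  forall a b, (a < r)%N -> (b < r)%N -> phi (h a) (h b) = (a == b)%:R.
Definition res r (h : nat -> V) y := y - \sum_(a < r) phi y (h a) *: h a.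

Lemma res_orth r h y b : ortho r h -> (b < r)%N -> phi (res r h y) (h b) = 0.
Proof.
move=> ho hb. rewrite /res phiBl phi_suml.
rewrite (eq_bigr (fun a : 'I_r => phi y (h a) * ((a : nat) == b)%:R)).
  by rewrite (sum_delta (fun a => phi y (h a))) // subrr.
by move=> a _; rewrite phiZl ho.
Qed.
Lemma res_orth' r h y b : ortho r h -> (b < r)%N -> phi (h b) (res r h y) = 0.
Proof. move=> ho hb; by rewrite phiC res_orth // Cconj0. Qed.

Lemma res_norm r h y : ortho r h ->
  phi (res r h y) (res r h y) = phi y y - \sum_(a < r) phi y (h a) * Cconj (phi y (h a)).
Proof.
move=> ho. rewrite {1}/res phiBl phi_suml.
rewrite big1; last by move=> a _; rewrite phiZl res_orth' // mulr0.
rewrite subr0 /res phiBr phi_sumr.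
congr (_ - _); apply: eq_bigr => a _. by rewrite phiZr mulrC.
Qed.

Definition definite := forall y, phi y y = 0 -> y = 0.

Lemma indep_prev n (x : nat -> V) : indep (n.+1) x -> indep n x.
Proof.
move=> hi c hc i hin. have := hi (fun l => if (l < n)%N then c l else 0).
rewrite big_ord_recr /= ltnn scale0r addr0.
rewrite (eq_bigr (fun l : 'I_n => c l *: x l)); last by move=> l _; rewrite ltn_ord.
move=> /(_ hc i (ltn_trans hin (ltnSn n))). by rewrite hin.
Qed.

Lemma GS n (x : nat -> V) : exists r (h : nat -> V),
  ortho r h /\ (forall a, (a < r)%N -> inspan n x (h a)) /\
  (forall k, (k < n)%N -> phi (res r h (x k)) (res r h (x k)) = 0) /\
  (definite -> indep n x -> r = n).
Proof.
elim: n => [|n [r [h [ho [hs [hres hdef]]]]]].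
  exists 0%N, (fun _ => 0); split => //; split => // a; by [].
set y := res r h (x n).
have hyreal := phi_real y.
case: (Req_dec (Cre (phi y y)) 0) => hy0.
-
  exists r, h; split => //; split.
    move=> a ha; apply: (inspan_mono (leqnSn n)); exact: hs.
  split.
    move=> k; rewrite ltnS leq_eqVlt; case/orP => [/eqP -> | hk]; last exact: hres.
    by rewrite -/y hyreal hy0.
  move=> hd hi. exfalso.
  have y0 : y = 0 by apply: hd; rewrite hyreal hy0.
  have : inspan n x (x n).
    have -> : x n = \sum_(a < r) phi (x n) (h a) *: h a.
      by apply/eqP; rewrite -subr_eq0; apply/eqP.
    apply: inspan_sum => a. apply: inspanZ. exact: hs.
  case=> c hc. have := hi (fun l => if (l < n)%N then c l else -1).
  rewrite big_ord_recr /= ltnn.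
  rewrite (eq_bigr (fun l : 'I_n => c l *: x l)); last by move=> l _; rewrite ltn_ord.
  rewrite -hc scaleN1r subrr => /(_ erefl n (ltnSn n)); rewrite ltnn => /eqP.
  by rewrite oppr_eq0 oner_eq0.
-
  have hpos : (0 < Cre (phi y y))%Re by have := phiP y; lra.
  set s := sqrt (Cre (phi y y)).
  have hs0 : (0 < s)%Re by apply: sqrt_lt_R0.
  have hss : (s * s = Cre (phi y y))%Re by apply: sqrt_sqrt; lra.
  clearbody s.
  set hr := RC (/ s) *: y.
  set h' := fun a => if a == r then hr else h a.
  have hh' : forall a, (a < r)%N -> h' a = h a by move=> a ha; rewrite /h' (ltn_eqF ha).
  have hr' : h' r = hr by rewrite /h'; case: eqP.
  clearbody h'.
  have hyh : forall b, (b < r)%N -> phi y (h b) = 0 by move=> b hb; apply: res_orth.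
  have hhr : phi hr hr = 1.
    rewrite /hr phiZl phiZr Cconj_RC hyreal -hss.
    apply: Cext; csimp; field; lra.
  have ho' : ortho r.+1 h'.
    move=> a b; rewrite !ltnS => ha hb.
    move: ha; rewrite leq_eqVlt => /orP [/eqP -> | ha]; move: hb; rewrite leq_eqVlt => /orP [/eqP -> | hb].
    + by rewrite hr' hhr eqxx.
    + rewrite hr' hh' // (gtn_eqF hb) /hr phiZl hyh // mulr0 //.
    + rewrite hr' hh' // (ltn_eqF ha) phiC /hr phiZl hyh // mulr0 Cconj0 //.
    + by rewrite !hh' // ho.
  have hxr : forall k, (k < n)%N -> phi (x k) hr = 0.
    move=> k hk. have hnull := phi_null hr (hres k hk).
    move: hnull; rewrite /res phiBl phi_suml.
    rewrite big1 ?subr0 // => a _. rewrite phiZl.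
    have := ho' a r (ltn_trans (ltn_ord a) (ltnSn r)) (ltnSn r).
    by rewrite hh' // (ltn_eqF (ltn_ord a)) hr' => ->; rewrite mulr0.
  have hres_ext : forall z, res r.+1 h' z = res r h z - phi z hr *: hr.
    move=> z; rewrite /res big_ord_recr /= hr' opprD addrA.
    congr (_ - _ - _). apply: eq_bigr => a _. by rewrite hh'.
  exists r.+1, h'; split => //; split.
    move=> a; rewrite ltnS leq_eqVlt => /orP [/eqP -> | ha].
      rewrite hr' /hr. apply: inspanZ. rewrite /y /res. apply: inspanB.
        exact: inspan_x.
      apply: inspan_sum => b. apply: inspanZ. apply: (inspan_mono (leqnSn n)). exact: hs.
    rewrite hh' //. apply: (inspan_mono (leqnSn n)); exact: hs.
  split.
    move=> k; rewrite ltnS leq_eqVlt => /orP [/eqP -> | hk].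
      have -> : res r.+1 h' (x n) = 0.
        rewrite hres_ext -/y.
        have -> : phi (x n) hr = RC s.
          have -> : x n = y + \sum_(a < r) phi (x n) (h a) *: h a by rewrite /y /res subrK.
          rewrite phiDl phi_suml big1; last first.
            move=> a _; rewrite phiZl.
            have := ho' a r (ltn_trans (ltn_ord a) (ltnSn r)) (ltnSn r).
            by rewrite hh' // (ltn_eqF (ltn_ord a)) hr' => ->; rewrite mulr0.
          rewrite addr0 /hr phiZr Cconj_RC hyreal -hss.
          apply: Cext; csimp; field; lra.
        rewrite /hr scalerA -RCM Rinv_r; last lra.
        by rewrite RC1 scale1r subrr.
      by rewrite phi0l.
    by rewrite hres_ext hxr // scale0r subr0; apply: hres.
  move=> hd hi. congr S. apply: hdef => //. exact: indep_prev.
Qed.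
End GS.
Local Open Scope ring_scope.

Lemma RC_Rsum n (f : nat -> R) : RC (Rsum n f) = \sum_(i < n) RC (f i).
Proof. elim: n => [|n IH]; first by rewrite big_ord0. by rewrite big_ord_recr /= RCD IH. Qed.
Lemma RC_pow j : RC ((-1) ^ j)%Re = (-1) ^+ j.
Proof. elim: j => [|j IH] //=. by rewrite exprS RCM IH RCN RC1. Qed.
Lemma ltb_bump k j : (if Nat.ltb k j then k else S k) = bump j k.
Proof.
rewrite /bump. case: (Nat.ltb_spec k j) => h.
- have/ltP h' := h. by rewrite leqNgt h'.
- have/leP h' := h. by rewrite h' add1n.
Qed.

Lemma det_RC n (M : nat -> nat -> R) :
  RC (det n M) = \det (\matrix_(i < n, j < n) RC (M i j)).
Proof.
elim: n M => [|m IH] M; first by rewrite det_mx00.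
rewrite (expand_det_row _ ord0) /det -/det RC_Rsum.
apply: eq_bigr => j _. rewrite !RCM RC_pow IH /cofactor mxE add0n mulrA.
rewrite [RC _ * _]mulrC. congr (_ * \det _). apply/matrixP => i k. rewrite !mxE ltb_bump.
by [].
Qed.

Lemma det0_ker n (M : 'M[Cpx]_n) : \det M = 0 -> exists z : 'rV_n, z != 0 /\ z *m M = 0.
Proof.
move=> h. have hu : ~~ (M \in unitmx) by rewrite unitmxE h unitr0.
have : kermx M != 0 by rewrite kermx_eq0 row_free_unit.
case/rowV0Pn => v /sub_kermxP hv hv0. by exists v.
Qed.

Lemma det_lastcol n (G : 'M[Cpx]_n.+1) (y : 'cV_n.+1) :
  \det (\matrix_(k, l) if (l < n)%N then G k l else (G *m y) k 0) = \det G * y ord_max 0.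
Proof.
set E : 'M[Cpx]_n.+1 := \matrix_(l, j) if (j < n)%N then ((l : nat) == j)%:R else y l 0.
have -> : \matrix_(k, l) (if (l < n)%N then G k l else (G *m y) k 0) = G *m E.
  apply/matrixP => k l; rewrite !mxE. case: ifP => hl.
    rewrite (bigD1 l) //= big1 ?addr0; first by rewrite !mxE hl eqxx mulr1.
    move=> i /negbTE hi; rewrite !mxE hl. by rewrite eq_sym -(inj_eq val_inj) in hi; rewrite eq_sym hi mulr0.
  by apply: eq_bigr => i _; rewrite !mxE hl.
rewrite det_mulmx; congr (_ * _).
rewrite -det_tr det_trig; last first.
  apply/is_trig_mxP => i j hij; rewrite !mxE.
  have hi : (i < n)%N by apply: (leq_trans hij); rewrite -ltnS.
  by rewrite hi (gtn_eqF hij).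
rewrite big_ord_recr /= big1 ?mul1r; first by rewrite !mxE ltnn.
by move=> i _; rewrite !mxE /= ltn_ord eqxx.
Qed.

Lemma steinitz (V : lmodType Cpx) m n (X b : nat -> V) (M : nat -> nat -> Cpx) :
  (n < m)%N -> (forall i, (i < m)%N -> X i = \sum_(j < n) M i j *: b j) ->
  exists d : nat -> Cpx, (exists i, (i < m)%N /\ d i != 0) /\ \sum_(i < m) d i *: X i = 0.
Proof.
case: m => [|m] // hnm hX.
set Mx : 'M[Cpx]_(m.+1, n) := \matrix_(i, j) M i j.
have hr : ~~ row_free Mx.
  rewrite /row_free; apply/negP => /eqP h. have := rank_leq_col Mx. rewrite h.
  by rewrite leqNgt hnm.
have : kermx Mx != 0 by rewrite kermx_eq0.
case/rowV0Pn => v /sub_kermxP hv hv0.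
exists (fun i => v 0 (inord i)); split.
  case/rV0Pn: hv0 => i hi. exists i; split => //. by rewrite inord_val.
rewrite (eq_bigr (fun i : 'I_m.+1 => v 0 i *: \sum_(j < n) M i j *: b j)); last first.
  by move=> i _; rewrite inord_val hX.
rewrite (eq_bigr (fun i : 'I_m.+1 => \sum_(j < n) (v 0 i * M i j) *: b j)); last first.
  by move=> i _; rewrite scaler_sumr; apply: eq_bigr => j _; rewrite scalerA.
rewrite exchange_big /= big1 // => j _. rewrite -scaler_suml.
have : (v *m Mx) 0 j = 0 by rewrite hv mxE.
rewrite mxE => h. rewrite (eq_bigr (fun i : 'I_m.+1 => v 0 i * Mx i j)); first by rewrite h scale0r.
by move=> i _; rewrite mxE.
Qed.
Local Open Scope ring_scope.

Lemma vsum_sum (H : HilbertSpace) n (f : nat -> H) : vsum H n f = \sum_(i < n) f i.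
Proof. elim: n => [|n IH] /=; first by rewrite big_ord0. by rewrite big_ord_recr IH. Qed.
Lemma eqb_eqn i j : Nat.eqb i j = (i == j).
Proof. case: (Nat.eqb_spec i j) => h; case: eqP => //. Qed.
Lemma ltb_ltn i j : Nat.ltb i j = (i < j)%N.
Proof. case: (Nat.ltb_spec i j) => h; [by have/ltP -> := h | by have/leP := h; rewrite leqNgt => /negbTE]. Qed.

Lemma sum_deltaV (V : lmodType Cpx) r (F : nat -> V) b : (b < r)%N ->
  \sum_(a < r) ((a : nat) == b)%:R *: F a = F b.
Proof.
elim: r => [|r IH] hb //. rewrite big_ord_recr /=.
case: (ltngtP b r) => h.
- by rewrite IH // scale0r addr0.
- by move: hb; rewrite ltnS leqNgt h.
- subst. rewrite scale1r big1 ?add0r // => a _. by rewrite (ltn_eqF (ltn_ord a)) scale0r.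
Qed.

Lemma sum_swap_scale (V : lmodType Cpx) n m (a : nat -> Cpx) (b : nat -> nat -> Cpx) (w : nat -> V) :
  \sum_(l < m) (\sum_(i < n) a i * b i l) *: w l = \sum_(i < n) a i *: \sum_(l < m) b i l *: w l.
Proof.
rewrite (eq_bigr (fun l : 'I_m => \sum_(i < n) (a i * b i l) *: w l)); last by move=> l _; rewrite scaler_suml.
rewrite exchange_big /=. apply: eq_bigr => i _. rewrite scaler_sumr. apply: eq_bigr => l _. by rewrite scalerA.
Qed.

Lemma Rs_ext n f g : (forall i, (i < n)%N -> f i = g i) -> Rs n f = Rs n g.
Proof. elim: n => [|n IH] h //=. rewrite IH ?h // => i hi. apply: h. exact: ltn_trans hi _. Qed.

Lemma det_cramer n (M : nat -> nat -> R) (b y : nat -> R) :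
  (forall k, (k < n.+1)%N -> b k = Rsum n.+1 (fun j => M k j * y j)%Re) ->
  det n.+1 (fun k l => if Nat.ltb l n then M k l else b k) = (det n.+1 M * y n)%Re.
Proof.
move=> hb. apply: RC_inj. rewrite RCM !det_RC.
set G := \matrix_(i < n.+1, j < n.+1) RC (M i j).
set yv : 'cV[Cpx]_n.+1 := \col_j RC (y j).
have -> : RC (y n) = yv ord_max 0 by rewrite mxE.
rewrite -det_lastcol. congr (\det _). apply/matrixP => k l. rewrite /G /yv !mxE ltb_ltn.
case: ifP => hl //.
rewrite hb // RC_Rsum ?mxE. apply: eq_bigr => j _. by rewrite ?mxE RCM.
Qed.

Lemma ortho_on (H : HilbertSpace) n (w : nat -> H) : ortho (inner H) n w <-> Defs.orthonormal H n w.
Proof.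
split.
- move=> h i j /ltP hi /ltP hj. rewrite h // eqb_eqn. by case: (i == j).
- move=> h i j hi hj. rewrite h; [|exact/ltP|exact/ltP]. rewrite eqb_eqn. by case: (i == j).
Qed.

Section Main.
Variable H : HilbertSpace.
Variables (A : H -> H) (e : H) (N : nat).
Hypothesis hlin : is_linear_op H A.
Hypothesis hsa : is_self_adjoint H A.
Hypothesis hpos : is_positive_op H A.
Hypothesis hN : (0 < N)%N.
Hypothesis hind : lin_indep H N (fun i => Nat.iter (S i) A e).

Local Notation ip := (inner H).
Lemma ipDl (x y z : H) : ip (x + y) z = ip x z + ip y z. Proof. exact: inner_addl. Qed.
Lemma ipZl a (x y : H) : ip (a *: x) y = a * ip x y. Proof. exact: inner_scall. Qed.
Lemma ipC (x y : H) : ip y x = Cconj (ip x y). Proof. exact: inner_conj. Qed.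
Lemma ipP (x : H) : (0 <= Cre (ip x x))%Re. Proof. exact: inner_pos. Qed.
Lemma ipdef : definite (inner H).
Proof. move=> y h; exact: inner_def. Qed.

Definition ipDr := phiDr ipDl ipZl ipC ipP.
Definition ipZr := phiZr ipDl ipZl ipC ipP.
Definition ip0l := phi0l ipDl ipZl ipC ipP.
Definition ip0r := phi0r ipDl ipZl ipC ipP.
Definition ipBl := phiBl ipDl ipZl ipC ipP.
Definition ipBr := phiBr ipDl ipZl ipC ipP.
Definition ip_suml := phi_suml ipDl ipZl ipC ipP.
Definition ip_sumr := phi_sumr ipDl ipZl ipC ipP.
Definition ip_real := phi_real ipDl ipZl ipC ipP.

Lemma AD (x y : H) : A (x + y) = A x + A y. Proof. exact: hlin.1. Qed.
Lemma AZ a (x : H) : A (a *: x) = a *: A x. Proof. exact: hlin.2. Qed.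
Lemma A0 : A 0 = 0. Proof. have := AZ 0 0. by rewrite !scale0r. Qed.
Lemma AB (x y : H) : A (x - y) = A x - A y.
Proof. by rewrite AD -scaleN1r AZ scaleN1r. Qed.
Lemma A_sum n (F : 'I_n -> H) : A (\sum_(i < n) F i) = \sum_(i < n) A (F i).
Proof. elim: n F => [|n IH] F; first by rewrite !big_ord0 A0. by rewrite !big_ord_recr AD IH. Qed.

Definition Aphi (x y : H) := ip (A x) y.
Lemma AphiDl x y z : Aphi (x + y) z = Aphi x z + Aphi y z. Proof. by rewrite /Aphi AD ipDl. Qed.
Lemma AphiZl a x y : Aphi (a *: x) y = a * Aphi x y. Proof. by rewrite /Aphi AZ ipZl. Qed.
Lemma AphiC x y : Aphi y x = Cconj (Aphi x y).
Proof. by rewrite /Aphi hsa (ipC (A x) y). Qed.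
Lemma AphiP x : (0 <= Cre (Aphi x x))%Re. Proof. exact: hpos. Qed.

Lemma Anull x : Cre (ip (A x) x) = 0%Re -> A x = 0.
Proof.
move=> h. have h0 : Aphi x x = 0.
  rewrite (phi_real AphiDl AphiZl AphiC AphiP). rewrite /Aphi h. exact: RC0.
apply: ipdef. exact: (phi_null AphiDl AphiZl AphiC AphiP (A x) h0).
Qed.

Definition v i := Nat.iter i A e.
Lemma vS i : v i.+1 = A (v i). Proof. by []. Qed.

Lemma indepK : indep N v.
Proof.
move=> c hc i hi.
have h2 : vsum H N (fun i => vscal H (c i) (Nat.iter (S i) A e)) = vzero H.
  rewrite vsum_sum. transitivity (\sum_(l < N) A (c l *: v l)).
    by apply: eq_bigr => l _; rewrite AZ.
  by rewrite -A_sum hc A0.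
exact: (hind h2 (elimTF ltP hi)).
Qed.

Lemma ip_shift l k m : ip (v (l + k)) (v m) = ip (v l) (v (m + k)).
Proof.
elim: k m => [|k IH] m; first by rewrite !addn0.
by rewrite addnS vS hsa -vS IH addSnnS.
Qed.
Lemma ip_vv l k : ip (v l) (v k) = RC (moment H A e (k + l)).
Proof.
have h1 : ip (v l) (v k) = ip (v (l + k)) (v 0) by rewrite ip_shift.
have h2 : ip (v (l + k)) (v 0) = ip (v 0) (v (l + k)) by have := ip_shift 0 (l + k) 0; rewrite !add0n.
have h3 : Cim (ip (v (l + k)) (v 0)) = 0%Re.
  have := f_equal Cim h2. rewrite (ipC (v (l + k)) (v 0)) Cim_conj. lra.
rewrite h1 /moment (addnC k l). apply: Cext; first by rewrite Cre_RC.
by rewrite Cim_RC h3.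
Qed.

Section WithU.
Variable u : nat -> H.
Variable alpha : nat -> nat -> Cpx.
Hypothesis hu_ortho : ortho ip N u.
Hypothesis hu_alpha : forall a, (a < N)%N -> u a = \sum_(l < N) alpha a l *: v l.
Hypothesis hu_rec : forall k, (k < N)%N -> v k = \sum_(a < N) ip (v k) (u a) *: u a.

Definition P y := \sum_(a < N) ip y (u a) *: u a.
Lemma resP y : res ip N u y = y - P y. Proof. by []. Qed.

Lemma dual k l : (k < N)%N -> (l < N)%N -> \sum_(i < N) ip (v k) (u i) * alpha i l = (k == l)%:R.
Proof.
move=> hk hl.
have h := indepK (c := fun l => \sum_(i < N) ip (v k) (u i) * alpha i l - ((l : nat) == k)%:R).
have /h : \sum_(i < N) (\sum_(i0 < N) ip (v k) (u i0) * alpha i0 i - (i == k :> nat)%:R) *: v i = 0.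
  rewrite (eq_bigr (fun i : 'I_N => (\sum_(i0 < N) ip (v k) (u i0) * alpha i0 i) *: v i - ((i : nat) == k)%:R *: v i)); last by move=> i _; rewrite scalerBl.
  rewrite sumrB sum_deltaV // (@sum_swap_scale _ N N (fun i => ip (v k) (u i)) alpha v).
  rewrite (eq_bigr (fun i : 'I_N => ip (v k) (u i) *: u i)); first by rewrite -hu_rec // subrr.
  by move=> i _; rewrite hu_alpha.
move=> /(_ l hl) /eqP; rewrite subr_eq0 => /eqP ->. by rewrite eq_sym.
Qed.

Lemma span_vu z : inspan N v z -> inspan N u z.
Proof.
apply: inspan_trans => l hl. exists (fun a => ip (v l) (u a)). exact: hu_rec.
Qed.

Lemma res_orth_span y z : inspan N u z -> ip (res ip N u y) z = 0.
Proof.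
case=> c ->. rewrite ip_sumr big1 // => a _. by rewrite ipZr res_orth ?mulr0 //; [exact: ipDl|exact: ipZl|exact: ipC|exact: ipP].
Qed.

Lemma P_span y : inspan N u (P y).
Proof. by exists (fun a => ip y (u a)). Qed.

Lemma span_P z : inspan N u z -> z = P z.
Proof.
move=> hz. apply/eqP; rewrite -subr_eq0; apply/eqP. rewrite -resP. apply: ipdef.
rewrite {2}resP ipBr !res_orth_span //; [by rewrite subr0 | exact: P_span].
Qed.

Definition c l := \sum_(i < N) ip (v N) (u i) * alpha i l.
Lemma P_vN : P (v N) = \sum_(l < N) c l *: v l.
Proof.
rewrite /c (@sum_swap_scale _ N N (fun i => ip (v N) (u i)) alpha v). apply: eq_bigr => i _. by rewrite hu_alpha.
Qed.

Lemma vN_split : v N = P (v N) + res ip N u (v N).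
Proof. by rewrite resP addrC subrK. Qed.

Lemma ip_vN_span z : inspan N u z -> ip (v N) z = ip (P (v N)) z.
Proof. move=> hz. by rewrite {1}vN_split ipDl res_orth_span // addr0. Qed.

Lemma normal_eq k : (k < N)%N -> ip (v N) (v k) = \sum_(l < N) c l * ip (v l) (v k).
Proof.
move=> hk. rewrite ip_vN_span; last by apply: span_vu; apply: inspan_x.
rewrite P_vN ip_suml. apply: eq_bigr => l _. by rewrite ipZl.
Qed.

Lemma trace_c : \sum_(i < N) ip (A (u i)) (u i) = c N.-1.
Proof.
rewrite (eq_bigr (fun i : 'I_N => \sum_(l < N) alpha i l * ip (v l.+1) (u i))); last first.
  move=> i _. rewrite {1}hu_alpha // A_sum ip_suml. apply: eq_bigr => l _. by rewrite AZ ipZl.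
rewrite exchange_big /=.
have hN1 : (N.-1 < N)%N by rewrite prednK.
rewrite (eq_bigr (fun l : 'I_N => ((l : nat) == N.-1)%:R * c N.-1)); last first.
  move=> l _. case: (ltngtP l N.-1) => hl.
  - rewrite mul0r. have hl1 : (l.+1 < N)%N by move: hl; rewrite -ltnS (prednK hN).
    transitivity (\sum_(i < N) ip (v l.+1) (u i) * alpha i l); first by apply: eq_bigr => i _; rewrite mulrC.
    by rewrite dual // (gtn_eqF (ltnSn l)).
  - by have := ltn_ord l; rewrite -[X in (_ < X)%N](prednK hN) ltnS leqNgt hl.
  - rewrite mul1r hl -vS (prednK hN).
    rewrite (eq_bigr (fun i : 'I_N => alpha i N.-1 * \sum_(k < N) c k * ip (v k) (u i))); last first.
      move=> i _. rewrite ip_vN_span; last by exists (fun a => (a == i :> nat)%:R); rewrite sum_deltaV.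
      by rewrite P_vN ip_suml; congr (_ * _); apply: eq_bigr => k _; rewrite ipZl.
    rewrite (eq_bigr (fun i : 'I_N => \sum_(k < N) c k * (ip (v k) (u i) * alpha i N.-1))); last first.
      move=> i _. rewrite big_distrr /=. apply: eq_bigr => k _. by rewrite mulrCA [alpha i N.-1 * _]mulrC.
    rewrite exchange_big /=.
    rewrite (eq_bigr (fun k : 'I_N => c k * ((k : nat) == N.-1)%:R)); first by rewrite sum_delta.
    move=> k _. by rewrite -big_distrr /= dual.
by rewrite (sum_delta' (fun _ => c N.-1)).
Qed.

Lemma normal_real k : (k < N)%N ->
  moment H A e (k + N) = Rsum N (fun l => moment H A e (k + l) * Cre (c l))%Re.
Proof.
move=> hk. have h := normal_eq hk.
have h2 : RC (moment H A e (k + N)) = \sum_(l < N) c l * RC (moment H A e (k + l)).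
  rewrite -ip_vv h. by apply: eq_bigr => l _; rewrite ip_vv.
have := f_equal Cre h2. rewrite Cre_RC (@Cre_sum N (fun l => c l * RC (moment H A e (k + l)))) Rsum_Rs => ->.
apply: Rs_ext => l _. match goal with |- ?G => idtac G end. rewrite CreM Cre_RC Cim_RC. ring.
Qed.

Lemma gram_ne0 : gram_det H A e N <> 0%Re.
Proof.
move=> h0.
have hd : \det (\matrix_(k < N, l < N) RC (moment H A e (k + l))) = 0.
  by rewrite -(@det_RC N (fun k l => moment H A e (k + l))) -/(gram_det H A e N) h0.
case: (det0_ker hd) => z [hz0 hz].
set zz := fun k : nat => if (insub k : option 'I_N) is Some j then Cconj (z 0 j) else 0.
have hzz : forall k : 'I_N, zz k = Cconj (z 0 k) by move=> k; rewrite /zz valK.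
set w := \sum_(k < N) zz k *: v k.
have hw : ip w w = 0.
  rewrite {1}/w ip_suml big1 // => k _. rewrite ipZl /w ip_sumr hzz.
  rewrite (eq_bigr (fun l : 'I_N => z 0 l * (\matrix_(k < N, l < N) RC (moment H A e (k + l))) l k)).
    by have := f_equal (fun M : 'M[Cpx]_(1, N) => M 0 k) hz; rewrite !mxE => ->; rewrite mulr0.
  by move=> l _; rewrite ipZr hzz CconjK ip_vv mxE.
have w0 := ipdef hw.
move/negP: hz0; apply. apply/eqP/rowP => k. rewrite mxE.
have := @indepK zz w0 k (ltn_ord k). rewrite hzz. move=> /(f_equal Cconj). by rewrite CconjK Cconj0.
Qed.

Lemma num_gram : num_det H A e N = (gram_det H A e N * Cre (c N.-1))%Re.
Proof.
rewrite /num_det /gram_det Nat.sub_1_r.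
have := @det_cramer N.-1 (fun k l => moment H A e (k + l)) (fun k => moment H A e (k + N)) (fun l => Cre (c l)).
rewrite (prednK hN). move=> h. rewrite h //. exact: normal_real.
Qed.

Lemma trace_value : Rsum N (fun i => Cre (ip (A (u i)) (u i))) = (num_det H A e N / gram_det H A e N)%Re.
Proof.
rewrite num_gram Rsum_Rs -Cre_sum trace_c. field. exact: gram_ne0.
Qed.

Lemma perp_null t : is_trace H A t -> t = (num_det H A e N / gram_det H A e N)%Re ->
  forall w, (forall a, (a < N)%N -> ip w (u a) = 0) -> A w = 0.
Proof.
move=> ht et w hw.
case: (Req_dec (Cre (ip (A w) w)) 0) => hq; first exact: Anull.
exfalso.
have hq' : (0 < Cre (ip (A w) w))%Re by have := hpos w; lra.
have hw0 : Cre (ip w w) <> 0%Re.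
  move=> h0. have w0 : w = 0 by apply: ipdef; rewrite ip_real h0.
  apply: hq. by rewrite w0 A0 ip0l.
have hwp : (0 < Cre (ip w w))%Re by have := ipP w; lra.
set s := sqrt (Cre (ip w w)).
have hs0 : (0 < s)%Re by apply: sqrt_lt_R0.
have hss : (s * s = Cre (ip w w))%Re by apply: sqrt_sqrt; lra.
clearbody s.
set w' := RC (/ s) *: w.
set u' := fun i => if (i < N)%N then u i else w'.
have hu'1 : forall i, (i < N)%N -> u' i = u i by move=> i hi; rewrite /u' hi.
have hu'2 : u' N = w' by rewrite /u' ltnn.
clearbody u'.
have hw'u : forall a, (a < N)%N -> ip w' (u a) = 0 by move=> a ha; rewrite /w' ipZl hw // mulr0.
have ho : ortho ip N.+1 u'.
  move=> i j; rewrite !ltnS => hi hj.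
  move: hi; rewrite leq_eqVlt => /orP [/eqP -> | hi]; move: hj; rewrite leq_eqVlt => /orP [/eqP -> | hj].
  - rewrite hu'2 eqxx /w' ipZl ipZr Cconj_RC ip_real -hss mulrA -RCM.
    apply: Cext; csimp; field; lra.
  - by rewrite hu'2 hu'1 // hw'u // (gtn_eqF hj).
  - by rewrite hu'2 hu'1 // ipC hw'u // Cconj0 (ltn_eqF hi).
  - by rewrite !hu'1 // hu_ortho.
have hmem := (proj1 ht) _ (ex_intro _ N.+1 (ex_intro _ u' (conj (proj1 (ortho_on _ _) ho) erefl))).
move: hmem. rewrite /= Rsum_Rs /=.
rewrite (Rs_ext (g := fun i => Cre (ip (A (u i)) (u i)))); last by move=> i hi; rewrite hu'1.
rewrite -Rsum_Rs trace_value -et hu'2 /w' AZ ipZl ipZr Cconj_RC mulrA -RCM Cre_RCM.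
have : (0 < / s * / s * Cre (ip (A w) w))%Re.
  apply: Rmult_lt_0_compat => //. apply: Rmult_lt_0_compat; apply: Rinv_0_lt_compat; lra.
lra.
Qed.

Section Perp.
Hypothesis hperp : forall w, (forall a, (a < N)%N -> ip w (u a) = 0) -> A w = 0.

Lemma A_P x : A x = A (P x).
Proof.
have e1 : x = P x + res ip N u x by rewrite resP addrC subrK.
rewrite {1}e1 AD (hperp (w := res ip N u x)) ?addr0 //.
move=> a ha; exact: (res_orth ipDl ipZl ipC ipP).
Qed.

Lemma range_ok : range_dim H A N.
Proof.
exists (fun i => v i.+1); split; first exact: hind.
move=> y; split.
- case=> x ->. exists (fun l => \sum_(a < N) ip x (u a) * alpha a l).
  rewrite vsum_sum A_P /P A_sum.
  rewrite (@sum_swap_scale _ N N (fun a => ip x (u a)) alpha (fun l => v l.+1)).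
  apply: eq_bigr => a _. rewrite AZ hu_alpha // A_sum. congr (_ *: _). apply: eq_bigr => l _. by rewrite AZ.
- case=> cc ->. exists (\sum_(i < N) cc i *: v i). rewrite vsum_sum A_sum.
  apply: eq_bigr => i _. by rewrite AZ.
Qed.

Lemma e_ok : in_range H A e.
Proof.
set N' := N.-1.
have eN : N = N'.+1 by rewrite prednK.
set z := res ip N u (v N).
have hz : A z = 0 by apply: hperp => a ha; exact: (res_orth ipDl ipZl ipC ipP).
have z0 : z = 0.
  apply: ipdef. rewrite {1}/z resP ipBl.
  rewrite (ipC z (P (v N))) res_orth_span ?Cconj0 ?subr0; last exact: P_span.
  have -> : v N = A (v N') by rewrite -vS -eN.
  by rewrite hsa hz ip0r.
have hvN : v N = \sum_(l < N) c l *: v l.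
  by rewrite -P_vN; apply/eqP; rewrite -subr_eq0; apply/eqP; rewrite -resP.
have hvN' : v N = c 0 *: v 0 + \sum_(0 <= i < N') c i.+1 *: v i.+1.
  by rewrite hvN -(big_mkord xpredT (fun l => c l *: v l)) eN big_nat_recl.
have hc0 : c 0 != 0.
  apply/eqP => hc0.
  set d := fun i => if (i < N')%N then c i.+1 else -1.
  have hsum : vsum H N (fun i => vscal H (d i) (Nat.iter (S i) A e)) = vzero H.
    rewrite vsum_sum -(big_mkord xpredT (fun i => d i *: v i.+1)) eN big_nat_recr //.
    rewrite /d ltnn scaleN1r.
    rewrite big_nat_cond (eq_bigr (fun i => c i.+1 *: v i.+1)); last first.
      by move=> i; rewrite andbT => /andP [_ ->].
    rewrite -big_nat_cond -eN.
    rewrite hvN' hc0 scale0r add0r. exact: subrr.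
  have hl : (N' < N)%coq_nat by apply/ltP; rewrite eN.
  have := hind hsum hl. rewrite /d ltnn => /eqP. by rewrite oppr_eq0 oner_eq0.
exists ((c 0)^-1 *: (v N' - \sum_(0 <= i < N') c i.+1 *: v i)).
rewrite AZ AB (big_mkord xpredT (fun i => c i.+1 *: v i)) A_sum.
rewrite (eq_bigr (fun i : 'I_N' => c i.+1 *: v i.+1)); last by move=> i _; rewrite AZ.
rewrite -(big_mkord xpredT (fun i => c i.+1 *: v i.+1)) -vS -eN hvN' addrK scalerA mulVf //.
by rewrite scale1r.
Qed.
End Perp.

Section Conv.
Hypothesis hrange : range_dim H A N.
Hypothesis he : in_range H A e.

Lemma v_range i : exists x, v i = A x.
Proof. case: i => [|i]; last by exists (v i). case: he => x hx. by exists x. Qed.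

Lemma hAK x : inspan N v (A x).
Proof.
case: hrange => b [_ hb].
have hbj : forall j, (j < N)%N -> inspan N v (b j).
  move=> j hj.
  set X := fun i => if (i < N)%N then v i else b j.
  have hX : forall i, exists cc : nat -> Cpx, (i < N.+1)%N -> X i = \sum_(j' < N) cc j' *: b j'.
    move=> i. case: (ltnP i N) => hi.
    - have [x1 hx] := v_range i.
      have [cc hcc] := (proj1 (hb (v i))) (ex_intro _ x1 hx).
      exists cc => _. by rewrite /X hi hcc vsum_sum.
    - exists (fun j' => (j' == j :> nat)%:R) => hi2.
      have -> : i = N by apply/eqP; rewrite eqn_leq hi andbT -ltnS.
      rewrite /X ltnn. by rewrite sum_deltaV.
  set M := fun i => proj1_sig (constructive_indefinite_description _ (hX i)).
  have hM : forall i, (i < N.+1)%N -> X i = \sum_(j' < N) M i j' *: b j'.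
    move=> i hi; rewrite /M; case: constructive_indefinite_description => /= cc hcc; exact: hcc.
  have [d [[i0 [hi0 hd0]] hsum]] := steinitz (ltnSn N) hM.
  move: hsum; rewrite big_ord_recr /=.
  rewrite (eq_bigr (fun i : 'I_N => d i *: v i)); last by move=> i _; rewrite /X ltn_ord.
  rewrite /X ltnn => hsum.
  case: (eqVneq (d N) 0) => hdN.
  - exfalso. move: hsum; rewrite hdN scale0r addr0 => hsum.
    have hi := indepK hsum. move: hi0; rewrite ltnS leq_eqVlt => /orP [/eqP hi0 | hi0].
    + by move: hd0; rewrite hi0 hdN eqxx.
    + by move: hd0; rewrite hi // eqxx.
  - have hbj' : d N *: b j = - \sum_(i < N) d i *: v i.
      by apply/eqP; rewrite -addr_eq0 addrC hsum.
    have -> : b j = (d N)^-1 *: (d N *: b j) by rewrite scalerA mulVf // scale1r.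
    rewrite hbj'. apply: inspanZ. apply: inspanN. apply: inspan_sum => i. apply: inspanZ.
    exact: inspan_x.
have [cc hcc] := (proj1 (hb (A x))) (ex_intro _ x erefl).
rewrite hcc vsum_sum. apply: inspan_sum => i. apply: inspanZ. exact: hbj.
Qed.

Lemma A_res x : A (res ip N u x) = 0.
Proof.
apply: ipdef. rewrite hsa. apply: res_orth_span. apply: span_vu. exact: hAK.
Qed.

Lemma A_P' x : A x = A (P x).
Proof.
have e1 : x = P x + res ip N u x by rewrite resP addrC subrK.
by rewrite {1}e1 AD A_res addr0.
Qed.

Lemma bound n w : ortho ip n w ->
  (Rs n (fun j => Cre (ip (A (w j)) (w j))) <= num_det H A e N / gram_det H A e N)%Re.
Proof.
move=> hw.
have [r [h [hoh [_ [hres _]]]]] := GS AphiDl AphiZl AphiC AphiP N u.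
set z := fun a => A (h a).
have hAu : forall k, (k < N)%N -> A (u k) = \sum_(a < r) Aphi (u k) (h a) *: z a.
  move=> k hk. have h0 := hres k hk.
  have : A (res Aphi r h (u k)) = 0.
    apply: Anull. rewrite -/(Aphi _ _) h0. by [].
  rewrite /res AB A_sum => /eqP. rewrite subr_eq0 => /eqP ->.
  apply: eq_bigr => a _. by rewrite AZ.
have hz_span : forall a, inspan N u (z a) by move=> a; apply: span_vu; exact: hAK.
have hdec : forall x, A x = \sum_(a < r) ip x (z a) *: z a.
  move=> x. rewrite A_P' /P A_sum.
  rewrite (eq_bigr (fun k : 'I_N => \sum_(a < r) (ip x (u k) * Aphi (u k) (h a)) *: z a)); last first.
    move=> k _. rewrite AZ hAu // scaler_sumr. apply: eq_bigr => a _. by rewrite scalerA.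
  rewrite exchange_big /=. apply: eq_bigr => a _. rewrite -scaler_suml. congr (_ *: _).
  rewrite (span_P (hz_span a)) /P ip_sumr. apply: eq_bigr => k _.
  rewrite ipZr /Aphi hsa -(ipC (z a) (u k)) mulrC. by [].
have htr : forall m (w0 : nat -> H), Rs m (fun j => Cre (ip (A (w0 j)) (w0 j))) =
    Rs r (fun a => Cre (\sum_(j < m) ip (z a) (w0 j) * Cconj (ip (z a) (w0 j)))).
  move=> m w0.
  rewrite -(@Cre_sum m (fun j => ip (A (w0 j)) (w0 j))).
  rewrite -(@Cre_sum r (fun a => \sum_(j < m) ip (z a) (w0 j) * Cconj (ip (z a) (w0 j)))).
  congr Cre.
  rewrite (eq_bigr (fun j : 'I_m => \sum_(a < r) ip (z a) (w0 j) * Cconj (ip (z a) (w0 j)))); last first.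
    move=> j _. rewrite hdec ip_suml. apply: eq_bigr => a _. by rewrite ipZl (ipC (z a) (w0 j)) mulrC.
  by rewrite exchange_big.
rewrite htr.
have hbes : forall a, (Cre (\sum_(j < n) ip (z a) (w j) * Cconj (ip (z a) (w j))) <= Cre (ip (z a) (z a)))%Re.
  move=> a. have := ipP (res ip n w (z a)).
  rewrite (res_norm ipDl ipZl ipC ipP) // CreB. lra.
have hpar : forall a, \sum_(i < N) ip (z a) (u i) * Cconj (ip (z a) (u i)) = ip (z a) (z a).
  move=> a. have e0 : res ip N u (z a) = 0 by rewrite resP -(span_P (hz_span a)) subrr.
  have := res_norm ipDl ipZl ipC ipP (z a) hu_ortho. rewrite e0 ip0l.
  move=> /eqP; rewrite eq_sym subr_eq0 => /eqP ->. by [].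
apply: (Rle_trans _ (Rs r (fun a => Cre (ip (z a) (z a))))).
  apply: Rs_le => a _. exact: hbes.
rewrite -trace_value Rsum_Rs htr. apply: Req_le. apply: Rs_ext => a _. by rewrite hpar.
Qed.
End Conv.
End WithU.
End Main.
Open Scope R_scope.
Unset Implicit Arguments.

Theorem lemma7 (H : HilbertSpace) (A : H -> H) (e : H) (N : nat) (t : R) :
  is_linear_op H A -> is_bounded_op H A ->
  is_self_adjoint H A -> is_positive_op H A ->
  is_trace H A t ->
  (Peano.le 1 N) ->
  lin_indep H N (fun i => Nat.iter (S i) A e) ->
  num_det H A e N / gram_det H A e N <= t /\
  (t = num_det H A e N / gram_det H A e N <-> (range_dim H A N /\ in_range H A e)).
Proof.
move=> hlin _ hsa hpos ht hN1 hind.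
have hN : (0 < N)%N by apply/ltP.
have [r [u [hou [hsp [hres hdef]]]]] := GS (@ipDl H) (@ipZl H) (@ipC H) (@ipP H) N (v A e).
have hr : r = N := hdef (@ipdef H) (indepK hlin hind).
subst r.
have hrec : forall k, (k < N)%N -> v A e k = (\sum_(a < N) inner H (v A e k) (u a) *: u a)%R.
  move=> k hk. have := @ipdef H _ (hres k hk). move/eqP. rewrite subr_eq0. by move/eqP.
have hal : forall a, exists cc : nat -> Cpx, (a < N)%N -> u a = (\sum_(l < N) cc l *: v A e l)%R.
  move=> a. case: (ltnP a N) => ha.
    have [cc hcc] := hsp a ha. by exists cc.
  by exists (fun _ => 0%R).
set alpha := fun a => proj1_sig (constructive_indefinite_description _ (hal a)).
have halpha : forall a, (a < N)%N -> u a = (\sum_(l < N) alpha a l *: v A e l)%R.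
  move=> a ha; rewrite /alpha; case: constructive_indefinite_description => /= cc hcc; exact: hcc.
clearbody alpha.
have tv := trace_value hlin hsa hN hind hou halpha hrec.
have part2 : num_det H A e N / gram_det H A e N <= t.
  rewrite -tv. apply: (proj1 ht). exists N, u. split => //. exact/ortho_on.
split => //. split.
- move=> et.
  have hperp := perp_null hlin hsa hpos hN hind hou halpha hrec ht et.
  split; first exact: (range_ok hlin hind hou halpha hperp).
  exact: (e_ok hlin hsa hN hind hou halpha hperp).
- case=> hrange he. apply: Rle_antisym => //.
  apply: (proj2 ht). move=> x [n [w [hw ->]]]. rewrite Rsum_Rs.
  have hw2 := proj2 (ortho_on _ _) hw. have hb := bound hlin hsa hpos hN hind hou halpha hrec hrange he hw2. exact: hb.
Qed.
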